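(* Let $(A_0,A_1,\partial_0,\partial_1,s)$ be a 1-truncated simplicial ring. Let $B=\{(f,g)\mid f,g\in A_1,\ \partial_1(f)=\partial_0(g)\}$, a subring of $A_1\times A_1$. Then the map $B\to A_1$, $(f,g)\mapsto f+g-s(a)$ with $a=\partial_1(f)=\partial_0(g)$, is a ring homomorphism if and only if $(\ker\partial_0)\cdot(\ker\partial_1)=0$.
   Context: Rings are commutative and unital. A 1-truncated simplicial ring is a collection of rings $A_0,A_1$ and ring homomorphisms $\partial_0,\partial_1:A_1\to A_0$, $s:A_0\to A_1$ with $\partial_0 s=\partial_1 s=\mathrm{id}_{A_0}$. *)

(* Defs.v *)
From HB Require Import structures.
From mathcomp Require Import all_boot all_order all_algebra.
Set Implicit Arguments. Unset Strict Implicit. Unset Printing Implicit Defensive.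
Import GRing.Theory.
Local Open Scope ring_scope.

Definition fiber_pred (A0 A1 : comPzRingType) (d0 d1 : A1 -> A0)
  : pred (A1 * A1)%type := fun fg => d1 fg.1 == d0 fg.2.

Definition glue_map (A0 A1 : comPzRingType) (d1 : A1 -> A0) (s : A0 -> A1)
  (fg : (A1 * A1)%type) : A1 := fg.1 + fg.2 - s (d1 fg.1).

Definition ring_hom_on (R S : pzRingType) (P : pred R) (phi : R -> S) : Prop :=
  [/\ phi 1 = 1,
      {in P &, forall x y, phi (x + y) = phi x + phi y} &
      {in P &, forall x y, phi (x * y) = phi x * phi y}].

(* (ker d0) * (ker d1) = 0 : every product of an element of ker d0 with
   an element of ker d1 vanishes (equivalently, the product ideal is 0). *)
Definition ker_prod_zero (A0 A1 : comPzRingType) (d0 d1 : A1 -> A0) : Prop :=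
  forall x y : A1, d0 x = 0 -> d1 y = 0 -> x * y = 0.

(* Main.v *)
Require Import Defs.
From HB Require Import structures.
From mathcomp Require Import all_boot all_order all_algebra.
From mathcomp Require Import ring.
Import GRing.Theory.
Local Open Scope ring_scope.

Theorem lemma3p4p5 (A0 A1 : comPzRingType)
  (d0 d1 : {rmorphism A1 -> A0}) (s : {rmorphism A0 -> A1})
  (hd0s : forall a : A0, d0 (s a) = a) (hd1s : forall a : A0, d1 (s a) = a) :
  ring_hom_on (fiber_pred d0 d1) (glue_map d1 s) <-> ker_prod_zero d0 d1.
Proof.
split.
- case=> _ _ HM x y hx hy.
  have Hy : fiber_pred d0 d1 (y, 0) by rewrite /fiber_pred /= hy raddf0.
  have Hx : fiber_pred d0 d1 (0, x) by rewrite /fiber_pred /= hx raddf0.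
  have := HM _ _ Hy Hx.
  rewrite /glue_map /= !mul0r !mulr0 ?raddf0 ?rmorph0 ?subr0 ?addr0 ?add0r.
  by rewrite hy raddf0 subr0 => ->; rewrite mulrC.
- move=> H; split.
  + by rewrite /glue_map /= !rmorph1 addrK.
  + case=> f g [f' g']; rewrite /glue_map /= => _ _.
    rewrite !raddfD /=; ring.
  + case=> f g [f' g']; rewrite /fiber_pred /glue_map /= => /eqP e /eqP e'.
    have k1 : (f - s (d1 f)) * (g' - s (d1 f')) = 0.
      rewrite mulrC; apply: H.
      by rewrite raddfB /= hd0s e' subrr.
      by rewrite raddfB /= hd1s subrr.
    have k2 : (g - s (d1 f)) * (f' - s (d1 f')) = 0.
      apply: H.
      by rewrite raddfB /= hd0s e subrr.
      by rewrite raddfB /= hd1s subrr.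
    rewrite !rmorphM /=.
    have -> : (f + g - s (d1 f)) * (f' + g' - s (d1 f')) =
      f * f' + g * g' - s (d1 f) * s (d1 f') +
      (f - s (d1 f)) * (g' - s (d1 f')) + (g - s (d1 f)) * (f' - s (d1 f')) by ring.
    by rewrite k1 k2 !addr0.
Qed.
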